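(* Let $n\ge1$ and let $\mathcal{M}\subseteq\mathbb{C}^{2^n}$ be a subspace of dimension greater than one. Then there are two orthonormal vectors $\phi,\psi\in\mathcal{M}$ such that $\sum_{x\in\{0,1\}^n}|\phi(x)|\cdot|\psi(x)|\ge\frac12$.
   Context: Vectors in $\mathbb{C}^{2^n}$ are written $\phi=\sum_{x\in\{0,1\}^n}\phi(x)|x\rangle$ in the standard basis. *)

(* Defs.v *)
From HB Require Import structures.
From mathcomp Require Import all_boot all_order all_algebra.
From mathcomp Require Import complex.
From mathcomp Require Import reals.
Set Implicit Arguments. Unset Strict Implicit. Unset Printing Implicit Defensive.
Import Order.TTheory GRing.Theory Num.Theory.
Local Open Scope ring_scope.

(* A vector of C^(2^n) is a row vector 'rV[R[i]]_(2^n); the coordinate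
   index i : 'I_(2^n) corresponds to x in {0,1}^n via binary expansion. *)

Definition cdot (R : rcfType) (N : nat) (u v : 'rV[R[i]]_N) : R[i] :=
  \sum_(x < N) u 0 x * (v 0 x)^*.

Definition orthonormal2 (R : rcfType) (N : nat) (u v : 'rV[R[i]]_N) : Prop :=
  cdot u u = 1 /\ cdot v v = 1 /\ cdot u v = 0.

(* Main.v *)
Require Import Defs.
From HB Require Import structures.
From mathcomp Require Import all_boot all_order all_algebra.
From mathcomp Require Import complex.
From mathcomp Require Import reals.
From mathcomp Require Import spectral sesquilinear.
From mathcomp Require Import ring.
Import Order.TTheory GRing.Theory Num.Theory.
Local Open Scope ring_scope.

Section H.
Variable R : realType.
Local Notation C := (R[i]).

Lemma cdot_sym N (a b : 'rV[C]_N) : cdot b a = (cdot a b)^*.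
Proof.
rewrite /cdot rmorph_sum; apply: eq_bigr => x _.
by rewrite rmorphM /= conjCK mulrC.
Qed.

Lemma cdot_comb N (a b : 'rV[C]_N) x1 y1 x2 y2 :
  cdot a a = 1 -> cdot b b = 1 -> cdot a b = 0 ->
  cdot (x1 *: a + y1 *: b) (x2 *: a + y2 *: b) = x1 * x2^* + y1 * y2^*.
Proof.
move=> Haa Hbb Hab.
have Hba : cdot b a = 0 by rewrite cdot_sym Hab rmorph0.
have -> : cdot (x1 *: a + y1 *: b) (x2 *: a + y2 *: b) =
  x1 * x2^* * cdot a a + x1 * y2^* * cdot a b + y1 * x2^* * cdot b a
  + y1 * y2^* * cdot b b.
  rewrite /cdot !mulr_sumr -!big_split /=; apply: eq_bigr => x _.
  rewrite !mxE rmorphD !rmorphM /=; ring.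
by rewrite Haa Hbb Hab Hba; ring.
Qed.

Lemma norm_key (u v : C) : `|u| + `|v| <= `|u - v| + `|u + v|.
Proof.
have H1 : `|u * 2| <= `|u - v| + `|u + v|.
  by rewrite (_ : u * 2 = (u - v) + (u + v)); [exact: ler_normD | ring].
have H2 : `|v * 2| <= `|u - v| + `|u + v|.
  rewrite (_ : v * 2 = - (u - v) + (u + v)); last ring.
  by rewrite -[X in _ <= X + _]normrN; exact: ler_normD.
rewrite normrM normr_nat in H1; rewrite normrM normr_nat in H2.
have := lerD H1 H2; rewrite -mulrDl.
rewrite (_ : (`|u - v| + `|u + v|) + (`|u - v| + `|u + v|) = (`|u - v| + `|u + v|) * 2); last ring.
by rewrite ler_pM2r ?ltr0n.
Qed.
Lemma pair_exists N (a b : 'rV[C]_N) :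
  cdot a a = 1 -> cdot b b = 1 -> cdot a b = 0 ->
  exists x1 y1 x2 y2 : C,
    orthonormal2 (x1 *: a + y1 *: b) (x2 *: a + y2 *: b) /\
    2^-1 <= \sum_(x < N) `|(x1 *: a + y1 *: b) 0 x| * `|(x2 *: a + y2 *: b) 0 x|.
Proof.
move=> Haa Hbb Hab.
set c : C := sqrtC (2^-1).
have c0 : 0 <= c by rewrite sqrtC_ge0 invr_ge0 ler0n.
have cc : c^* = c by rewrite geC0_conj.
have c2 : c * c = 2^-1 by rewrite -expr2 sqrtCK.
have two : (2 : C) != 0 by rewrite pnatr_eq0.
have ON (k : C) : k * k^* = 1 ->
    orthonormal2 (c *: a + (c * k) *: b) (c *: a + (- (c * k)) *: b).
  move=> kk; rewrite /orthonormal2 !cdot_comb // rmorphN !rmorphM /= cc.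
  split; [|split].
  - rewrite (_ : c * c + c * k * (c * k^*) = c * c * (1 + k * k^*)); last ring.
    by rewrite kk c2; field.
  - rewrite (_ : c * c + - (c * k) * - (c * k^*) = c * c * (1 + k * k^*)); last ring.
    by rewrite kk c2; field.
  - rewrite (_ : c * c + c * k * - (c * k^*) = c * c * (1 - k * k^*)); last ring.
    by rewrite kk subrr mulr0.
pose S (k : C) := \sum_(x < N) `|(c *: a + (c * k) *: b) 0 x| *
                               `|(c *: a + (- (c * k)) *: b) 0 x|.
have SE k : S k = c * c * \sum_(x < N) `|a 0 x ^+ 2 - k ^+ 2 * b 0 x ^+ 2|.
  rewrite /S mulr_sumr; apply: eq_bigr => x _; rewrite -normrM !mxE.
  rewrite (_ : (c * a 0 x + c * k * b 0 x) * (c * a 0 x + - (c * k) * b 0 x) = c * c * (a 0 x ^+ 2 - k ^+ 2 * b 0 x ^+ 2)); last ring.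
  by rewrite normrM (ger0_norm (mulr_ge0 c0 c0)).
have Hsum : 1 <= S 1 + S 'i.
  rewrite !SE expr1n sqrCi -mulrDr -big_split /=.
  apply: (@le_trans _ _ (c * c * \sum_(x < N) (`|a 0 x ^+ 2| + `|b 0 x ^+ 2|))).
    rewrite big_split /=.
    have E (v : 'rV[C]_N) : \sum_(x < N) `|v 0 x ^+ 2| = cdot v v.
      by rewrite /cdot; apply: eq_bigr => x _; rewrite normrX normCK.
    by rewrite !E Haa Hbb c2; rewrite (_ : (2:C)^-1 * (1 + 1) = 1) //; field.
  have cpos : 0 < c * c by rewrite c2 invr_gt0 ltr0n.
  rewrite ler_pM2l //.
  apply: ler_sum => x _; rewrite mul1r mulN1r opprK; exact: norm_key.
have Sge k : 0 <= S k by apply: sumr_ge0 => x _; rewrite mulr_ge0.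
have i2 : 0 <= (2:C)^-1 by rewrite invr_ge0 ler0n.
have [H1|H1] := real_leP (ger0_real i2) (ger0_real (Sge 1)).
  exists c, (c * 1), c, (- (c * 1)); split => //; apply: ON.
  by rewrite rmorph1 mulr1.
exists c, (c * 'i), c, (- (c * 'i)); split.
  by apply: ON; rewrite -normCK normCi expr1n.
rewrite -/(S 'i).
have h : 2^-1 + 2^-1 = 1 :> C by field.
apply: (le_trans _ (_ : 1 - S 1 <= S 'i)).
  by rewrite lerBrDr -[X in _ <= X]h lerD2l ltW.
by rewrite lerBlDl.
Qed.
End H.


Theorem lemma3 (R : realType) (n m : nat) (U : 'M[R[i]]_(m, 2 ^ n)) :
  (1 <= n)%N -> (1 < \rank U)%N ->
  exists phi psi : 'rV[R[i]]_(2 ^ n),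
    (phi <= U)%MS /\ (psi <= U)%MS /\ orthonormal2 phi psi /\
    2^-1 <= \sum_(x < 2 ^ n) `|phi 0 x| * `|psi 0 x|.
Proof.
move=> _ hr.
set W := schmidt (row_base U).
have Wu : W \is unitarymx by apply: schmidt_unitarymx; exact: rank_leq_col.
have WU : (W :=: U)%MS.
  exact: eqmx_trans (eqmx_schmidt_free (row_base_free U)) (eq_row_base U).
have Hd i j : cdot (row i W) (row j W) = (i == j)%:R.
  move/unitarymxP/matrixP: Wu => /(_ i j); rewrite !mxE => <-.
  by rewrite /cdot; apply: eq_bigr => k _; rewrite !mxE.
have h0 : (0 < \rank U)%N by apply: ltn_trans hr.
pose i0 : 'I_(\rank U) := Ordinal h0.
pose i1 : 'I_(\rank U) := Ordinal hr.
have [x1 [y1 [x2 [y2 [Hon Hs]]]]] :=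
  @pair_exists R _ _ _ (Hd i0 i0) (Hd i1 i1) (Hd i0 i1).
have sub (x y : R[i]) : ((x *: row i0 W + y *: row i1 W)%R <= U)%MS.
  have r0 k : (row k W <= U)%MS by rewrite -WU row_sub.
  apply: addmx_sub; apply: scalemx_sub; exact: r0.
exists (x1 *: row i0 W + y1 *: row i1 W), (x2 *: row i0 W + y2 *: row i1 W).
split; first exact: sub.
split; first exact: sub.
exact: (conj Hon Hs).
Qed.
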